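(* Let $N\ge1$, $\mathbf{S}=(\mathsf{SNR}_{s,r},\mathsf{SNR}_{s,1},\dots,\mathsf{SNR}_{s,N},\mathsf{SNR}_{r,1},\dots,\mathsf{SNR}_{r,N})\in[0,\infty)^{2N+1}$, $\rho\in[0,1]$, $\mathsf{C}(x)=\tfrac12\log(1+x)$, and for $j=1,\dots,N$ $$f_j(\rho,\mathbf{S})=\mathsf{SNR}_{s,j}+\mathsf{SNR}_{r,j}+2\rho\sqrt{\mathsf{SNR}_{s,j}\mathsf{SNR}_{r,j}},\qquad g^*_j(\rho,\mathbf{S})=(1-\rho^2)\,\mathsf{SNR}_{s,r},$$ $$R_{DF}(\rho,\mathbf{S})=\min_{1\le j\le N}\min\big(\mathsf{C}(f_j(\rho,\mathbf{S})),\mathsf{C}(g^*_j(\rho,\mathbf{S}))\big).$$ Then $R_{DF}(\rho,\mathbf{S})$ is concave in $\rho\in[0,1]$ for fixed $\mathbf{S}$, concave in $\mathbf{S}\in[0,\infty)^{2N+1}$ for fixed $\rho$, and the map $(t,\mathbf{S})\mapsto R_{DF}(\sqrt t,\mathbf{S})$ is quasi-concave on $[0,1]\times[0,\infty)^{2N+1}$ (i.e., quasi-concave in $(\rho^2,\mathbf{S})$).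
   Context: $R_{DF}$ is the decode-forward rate expression for a real AWGN multicast relay channel with source $s$, relay $r$, destinations $1,\dots,N$, link SNRs $\mathsf{SNR}_{u,v}\ge0$ and source–relay input correlation coefficient $\rho$. A function $F$ on a convex set is quasi-concave if $F(\lambda x_1+(1-\lambda)x_2)\ge\min(F(x_1),F(x_2))$ for all $x_1,x_2$ and $\lambda\in[0,1]$. *)

(* Defs.v *)
From HB Require Import structures.
From mathcomp Require Import all_boot all_order all_algebra.
From mathcomp Require Import all_classical all_reals all_analysis.
Set Implicit Arguments. Unset Strict Implicit. Unset Printing Implicit Defensive.
Import Order.TTheory GRing.Theory Num.Theory.
Local Open Scope ring_scope.

(* The SNR vector S = (SNR_{s,r}, SNR_{s,1..N}, SNR_{r,1..N}) in R^{2N+1}. *)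
Record snrvec (R : realType) (N : nat) := SNRVec {
  snr_sr : R;
  snr_s  : 'I_N -> R;
  snr_r  : 'I_N -> R
}.

Definition snr_nonneg (R : realType) (N : nat) (S : snrvec R N) : Prop :=
  0 <= snr_sr S /\ (forall j, 0 <= snr_s S j) /\ (forall j, 0 <= snr_r S j).

Definition snr_comb (R : realType) (N : nat) (l : R) (S1 S2 : snrvec R N)
  : snrvec R N :=
  SNRVec (l * snr_sr S1 + (1 - l) * snr_sr S2)
         (fun j => l * snr_s S1 j + (1 - l) * snr_s S2 j)
         (fun j => l * snr_r S1 j + (1 - l) * snr_r S2 j).

Definition Ccap (R : realType) (x : R) : R := ln (1 + x) / 2.

Definition f_j (R : realType) (N : nat) (rho : R) (S : snrvec R N) (j : 'I_N) : R :=
  snr_s S j + snr_r S j + 2 * rho * Num.sqrt (snr_s S j * snr_r S j).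

Definition gstar_j (R : realType) (N : nat) (rho : R) (S : snrvec R N) (j : 'I_N) : R :=
  (1 - rho ^+ 2) * snr_sr S.

(* R_DF = min_{1<=j<=N} min(C(f_j), C(gstar_j)).  The big-min needs a seed;
   we seed it with C(gstar) (which does not depend on j), so for N >= 1 this is
   exactly the minimum over j. *)
Definition R_DF (R : realType) (N : nat) (rho : R) (S : snrvec R N) : R :=
  \big[Num.min/Ccap ((1 - rho ^+ 2) * snr_sr S)]_(j < N)
     Num.min (Ccap (f_j rho S j)) (Ccap (gstar_j rho S j)).

(* Main.v *)
Require Import Defs.
From HB Require Import structures.
From mathcomp Require Import all_boot all_order all_algebra.
From mathcomp Require Import all_classical all_reals all_analysis.
From mathcomp Require Import ring lra.
Import Order.TTheory GRing.Theory Num.Theory.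
Local Open Scope ring_scope.
Set Implicit Arguments. Unset Strict Implicit.


Lemma aux_sq (R : realFieldType) (p q d : R) : 0 <= p -> 0 <= q -> 0 <= d ->
  p * q + d * (p + q) + d ^+ 2 <= (p + q + d) ^+ 2.
Proof. move=> hp hq hd; nra. Qed.

Lemma claim2 (R : realFieldType) (c x y X Y : R) :
  0 <= x -> 0 <= y -> 0 <= X -> 0 <= Y -> 0 <= c - X - Y ->
  x * y * (c - X - Y) * ((c - X - Y) * (X * Y) + 2 * (X * Y) * (c - x - y)
     - (c - X - Y) * (Y * x + X * y))
  <= (c - x - y) ^+ 2 * (X * Y) ^+ 2.
Proof.
move=> hx hy hX hY hV.
set V := c - X - Y.
have E : (c - x - y) ^+ 2 * (X * Y) ^+ 2 -
  x * y * V * (V * (X * Y) + 2 * (X * Y) * (c - x - y) - V * (Y * x + X * y))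
  = ((c - x - y) * (X * Y) - V * (x * y)) ^+ 2 - V ^+ 2 * (x * y) * ((x - X) * (y - Y)).
  by rewrite /V; ring.
rewrite -subr_ge0 E subr_ge0.
have hxy : 0 <= x * y by apply: mulr_ge0.
have hV2 : 0 <= V ^+ 2 * (x * y) by apply: mulr_ge0 => //; apply: sqr_ge0.
have [hdx|hdx] := lerP X x; have [hdy|hdy] := lerP Y y.
-
  have eA : (c - x - y) * (X * Y) - V * (x * y) =
     - (X * Y * ((x - X) + (y - Y)) + V * (x * y - X * Y)) by rewrite /V; ring.
  have hP : 0 <= X * (y - Y) by apply: mulr_ge0; lra.
  have hQ : 0 <= Y * (x - X) by apply: mulr_ge0; lra.
  have hD : 0 <= (x - X) * (y - Y) by apply: mulr_ge0; lra.
  have e1 : x * y - X * Y = X * (y - Y) + Y * (x - X) + (x - X) * (y - Y) by ring.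
  have e2 : x * y * ((x - X) * (y - Y)) = (X * (y - Y)) * (Y * (x - X))
      + (x - X) * (y - Y) * (X * (y - Y) + Y * (x - X)) + ((x - X) * (y - Y)) ^+ 2.
    by ring.
  have h1 := @aux_sq _ _ _ _ hP hQ hD.
  have hm : 0 <= x * y - X * Y by rewrite e1; lra.
  have hXY : 0 <= X * Y by apply: mulr_ge0.
  have hs : 0 <= X * Y * ((x - X) + (y - Y)) by apply: mulr_ge0; lra.
  have hVm : 0 <= V * (x * y - X * Y) by apply: mulr_ge0.
  rewrite eA sqrrN.
  have h2 : (V * (x * y - X * Y)) ^+ 2 <= (X * Y * ((x - X) + (y - Y)) + V * (x * y - X * Y)) ^+ 2.
    by rewrite ler_sqr ?nnegrE; lra.
  apply: le_trans h2.
  rewrite exprMn -mulrA ler_wpM2l ?sqr_ge0 //.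
  by rewrite e2 e1.
- have : V ^+ 2 * (x * y) * ((x - X) * (y - Y)) <= 0.
    apply: mulr_ge0_le0 => //; apply: mulr_ge0_le0; lra.
  move=> h; apply: le_trans h _; apply: sqr_ge0.
- have : V ^+ 2 * (x * y) * ((x - X) * (y - Y)) <= 0.
    apply: mulr_ge0_le0 => //; apply: mulr_le0_ge0; lra.
  move=> h; apply: le_trans h _; apply: sqr_ge0.
- have eA : (c - x - y) * (X * Y) - V * (x * y) =
     X * Y * ((X - x) + (Y - y)) + V * (X * Y - x * y) by rewrite /V; ring.
  have hp : 0 <= x * (Y - y) by apply: mulr_ge0; lra.
  have hq : 0 <= y * (X - x) by apply: mulr_ge0; lra.
  have hd : 0 <= (X - x) * (Y - y) by apply: mulr_ge0; lra.
  have e1 : X * Y - x * y = x * (Y - y) + y * (X - x) + (X - x) * (Y - y) by ring.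
  have e2 : x * y * ((x - X) * (y - Y)) = (x * (Y - y)) * (y * (X - x)) by ring.
  have hm : 0 <= X * Y - x * y by rewrite e1; lra.
  have hXY : 0 <= X * Y by apply: mulr_ge0.
  have hs : 0 <= X * Y * ((X - x) + (Y - y)) by apply: mulr_ge0; lra.
  have hVm : 0 <= V * (X * Y - x * y) by apply: mulr_ge0.
  rewrite eA.
  have h2 : (V * (X * Y - x * y)) ^+ 2 <= (X * Y * ((X - x) + (Y - y)) + V * (X * Y - x * y)) ^+ 2.
    by rewrite ler_sqr ?nnegrE; lra.
  apply: le_trans h2.
  rewrite exprMn -mulrA ler_wpM2l ?sqr_ge0 // e2 e1.
  have := @aux_sq _ _ _ _ hp hq hd; nra.
Qed.

Section Helpers.
Variable R : realType.
Implicit Types (l c x y X Y t p q d a m : R).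

Lemma claim1 c x y X Y : 0 <= x -> 0 <= y -> 0 <= X -> 0 <= Y ->
  c - x - y <= 0 -> 0 < c - X - Y ->
  (c - X - Y) * (X * Y) + 2 * (X * Y) * (c - x - y)
     - (c - X - Y) * (Y * x + X * y) <= 0.
Proof.
move=> hx hy hX hY hv hV.
have h1 : X * Y - Y * x - X * y <= 0.
  have [h|h] := lerP X x.
    have : Y * (X - x) <= 0 by apply: mulr_ge0_le0 => //; lra.
    have : 0 <= X * y by apply: mulr_ge0.
    move=> ? ?; have -> : X * Y - Y * x - X * y = Y * (X - x) - X * y by ring.
    lra.
  have : X * (Y - y) <= 0 by apply: mulr_ge0_le0 => //; lra.
  have : 0 <= Y * x by apply: mulr_ge0.
  move=> ? ?; have -> : X * Y - Y * x - X * y = X * (Y - y) - Y * x by ring.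
  lra.
have h2 : (c - X - Y) * (X * Y - Y * x - X * y) <= 0
  by apply: mulr_ge0_le0 => //; lra.
have h3 : 2 * (X * Y) * (c - x - y) <= 0.
  by apply: mulr_ge0_le0 => //; apply: mulr_ge0 => //; apply: mulr_ge0.
have -> : (c - X - Y) * (X * Y) + 2 * (X * Y) * (c - x - y)
     - (c - X - Y) * (Y * x + X * y) =
   (c - X - Y) * (X * Y - Y * x - X * y) + 2 * (X * Y) * (c - x - y) by ring.
lra.
Qed.

Lemma sqrt_sq2 t x y : 0 <= t -> 0 <= x * y ->
  (2 * Num.sqrt t * Num.sqrt (x * y)) ^+ 2 = 4 * t * (x * y).
Proof.
move=> ht hxy; rewrite !exprMn !sqr_sqrtr //; ring.
Qed.

Lemma pt_fact c t x y : 0 <= t -> 0 <= x -> 0 <= y ->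
  c <= x + y + 2 * Num.sqrt t * Num.sqrt (x * y) ->
  c - x - y <= 0 \/ (0 < c - x - y /\ (c - x - y) ^+ 2 <= 4 * t * (x * y)).
Proof.
move=> ht hx hy hc.
have hxy : 0 <= x * y by apply: mulr_ge0.
have hw : 0 <= 2 * Num.sqrt t * Num.sqrt (x * y).
  by apply: mulr_ge0; [apply: mulr_ge0 => //; apply: sqrtr_ge0 | apply: sqrtr_ge0].
have [h|h] := lerP (c - x - y) 0; [by left | right; split => //].
rewrite -sqrt_sq2 //; rewrite ler_sqr ?nnegrE; lra.
Qed.


Lemma tang c t x y X Y : 0 <= t -> 0 <= x -> 0 <= y -> 0 <= X -> 0 <= Y ->
  0 < c - X - Y -> 0 < X * Y ->
  (c - x - y <= 0 \/ (0 < c - x - y /\ (c - x - y) ^+ 2 <= 4 * t * (x * y))) ->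
  (c - X - Y) * ((c - X - Y) * (X * Y) + 2 * (X * Y) * (c - x - y)
     - (c - X - Y) * (Y * x + X * y)) <= 4 * t * (X * Y) ^+ 2.
Proof.
move=> ht hx hy hX hY hV ha [hv|[hv hv2]].
  have := claim1 hx hy hX hY hv hV => hK.
  have : 0 <= 4 * t * (X * Y) ^+ 2.
    by apply: mulr_ge0; [apply: mulr_ge0 => //; lra | apply: sqr_ge0].
  have : (c - X - Y) * ((c - X - Y) * (X * Y) + 2 * (X * Y) * (c - x - y)
     - (c - X - Y) * (Y * x + X * y)) <= 0 by apply: mulr_ge0_le0 => //; lra.
  lra.
have hxy : 0 <= x * y by apply: mulr_ge0.
have hxy0 : 0 < x * y.
  rewrite lt_neqAle hxy andbT; apply/eqP => e.
  move: hv2; rewrite -e mulr0 => h.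
  have : 0 < (c - x - y) ^+ 2 by apply: exprn_gt0.
  lra.
have h2 := claim2 hx hy hX hY (ltW hV).
have h3 : (c - x - y) ^+ 2 * (X * Y) ^+ 2 <= 4 * t * (x * y) * (X * Y) ^+ 2.
  by apply: ler_wpM2r => //; apply: sqr_ge0.
rewrite -(ler_pM2l hxy0).
apply: (le_trans _ (le_trans h3 _)).
  by rewrite !mulrA in h2 *.
by rewrite [4 * t * (x * y)]mulrC !mulrA.
Qed.

Lemma key l c t1 t2 x1 x2 y1 y2 : 0 <= l -> l <= 1 ->
  0 <= t1 -> 0 <= t2 -> 0 <= x1 -> 0 <= x2 -> 0 <= y1 -> 0 <= y2 ->
  c <= x1 + y1 + 2 * Num.sqrt t1 * Num.sqrt (x1 * y1) ->
  c <= x2 + y2 + 2 * Num.sqrt t2 * Num.sqrt (x2 * y2) ->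
  c <= (l * x1 + (1 - l) * x2) + (l * y1 + (1 - l) * y2) +
     2 * Num.sqrt (l * t1 + (1 - l) * t2) *
       Num.sqrt ((l * x1 + (1 - l) * x2) * (l * y1 + (1 - l) * y2)).
Proof.
move=> l0 l1 ht1 ht2 hx1 hx2 hy1 hy2 hc1 hc2.
set X := l * x1 + (1 - l) * x2; set Y := l * y1 + (1 - l) * y2.
set T := l * t1 + (1 - l) * t2.
have hX : 0 <= X by rewrite /X; apply: addr_ge0; apply: mulr_ge0 => //; lra.
have hY : 0 <= Y by rewrite /Y; apply: addr_ge0; apply: mulr_ge0 => //; lra.
have hT : 0 <= T by rewrite /T; apply: addr_ge0; apply: mulr_ge0 => //; lra.
have ha : 0 <= X * Y by apply: mulr_ge0.
have hw : 0 <= 2 * Num.sqrt T * Num.sqrt (X * Y).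
  by apply: mulr_ge0; [apply: mulr_ge0 => //; apply: sqrtr_ge0 | apply: sqrtr_ge0].
have [hV|hV] := lerP (c - X - Y) 0; first lra.
have P1 := pt_fact ht1 hx1 hy1 hc1.
have P2 := pt_fact ht2 hx2 hy2 hc2.
have eV : c - X - Y = l * (c - x1 - y1) + (1 - l) * (c - x2 - y2) by rewrite /X /Y; ring.
have zc : forall (k t x y : R), 0 <= k -> 0 <= t -> 0 <= x -> 0 <= y ->
    (c - x - y <= 0 \/ (0 < c - x - y /\ (c - x - y) ^+ 2 <= 4 * t * (x * y))) ->
    (k * x = 0 \/ k * y = 0) -> k * (c - x - y) <= 0.
  move=> k t x y hk ht hx hy [hv|[hv hv2]] hz; first by apply: mulr_ge0_le0.
  have e : k * (4 * t * (x * y)) = 0.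
    case: hz => hz.
      have -> : k * (4 * t * (x * y)) = 4 * t * y * (k * x) by ring.
      by rewrite hz mulr0.
    have -> : k * (4 * t * (x * y)) = 4 * t * x * (k * y) by ring.
    by rewrite hz mulr0.
  have : k * (c - x - y) ^+ 2 <= 0 by rewrite -e; apply: ler_wpM2l.
  rewrite expr2 mulrA => h.
  by rewrite -(pmulr_lle0 _ hv).
have ha0 : 0 < X * Y.
  rewrite lt_neqAle ha andbT; apply/eqP => e.
  have [eX|eY] : X = 0 \/ Y = 0.
      by move/esym/eqP: e; rewrite mulf_eq0 => /orP[] /eqP; [left|right].
    have h1 : l * x1 = 0.
      have : 0 <= l * x1 by apply: mulr_ge0.
      have : 0 <= (1 - l) * x2 by apply: mulr_ge0 => //; lra.
      move: eX; rewrite /X; lra.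
    have h2 : (1 - l) * x2 = 0.
      have : 0 <= l * x1 by apply: mulr_ge0.
      have : 0 <= (1 - l) * x2 by apply: mulr_ge0 => //; lra.
      move: eX; rewrite /X; lra.
    have := zc l t1 x1 y1 l0 ht1 hx1 hy1 P1 (or_introl h1).
    have := zc (1 - l) t2 x2 y2 ltac:(lra) ht2 hx2 hy2 P2 (or_introl h2).
    lra.
  have h1 : l * y1 = 0.
    have : 0 <= l * y1 by apply: mulr_ge0.
    have : 0 <= (1 - l) * y2 by apply: mulr_ge0 => //; lra.
    move: eY; rewrite /Y; lra.
  have h2 : (1 - l) * y2 = 0.
    have : 0 <= l * y1 by apply: mulr_ge0.
    have : 0 <= (1 - l) * y2 by apply: mulr_ge0 => //; lra.
    move: eY; rewrite /Y; lra.
  have := zc l t1 x1 y1 l0 ht1 hx1 hy1 P1 (or_intror h1).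
  have := zc (1 - l) t2 x2 y2 ltac:(lra) ht2 hx2 hy2 P2 (or_intror h2).
  lra.
have T1 := tang ht1 hx1 hy1 hX hY hV ha0 P1.
have T2 := tang ht2 hx2 hy2 hX hY hV ha0 P2.
set V := c - X - Y in hV eV T1 T2 *.
set K1 := (V * (X * Y) + 2 * (X * Y) * (c - x1 - y1) - V * (Y * x1 + X * y1)) in T1.
set K2 := (V * (X * Y) + 2 * (X * Y) * (c - x2 - y2) - V * (Y * x2 + X * y2)) in T2.
have eK : l * K1 + (1 - l) * K2 = V * (X * Y).
  rewrite /K1 /K2 /V /X /Y; ring.
have h4 : V * (V * (X * Y)) <= 4 * T * (X * Y) ^+ 2.
  rewrite -eK.
  have -> : 4 * T * (X * Y) ^+ 2 = l * (4 * t1 * (X * Y) ^+ 2) + (1 - l) * (4 * t2 * (X * Y) ^+ 2) by rewrite /T; ring.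
  have e : V * (l * K1 + (1 - l) * K2) = l * (V * K1) + (1 - l) * (V * K2) by ring.
  rewrite e; apply: lerD; apply: ler_wpM2l => //; lra.
have h5 : V ^+ 2 <= 4 * T * (X * Y).
  rewrite -(ler_pM2r ha0).
  by move: h4; rewrite expr2 !mulrA.
have h6 : V ^+ 2 <= (2 * Num.sqrt T * Num.sqrt (X * Y)) ^+ 2 by rewrite sqrt_sq2.
move: h6; rewrite ler_sqr ?nnegrE ?(ltW hV) //.
move=> h7. have : c - X - Y <= 2 * Num.sqrt T * Num.sqrt (X * Y) by [].
clear -h7. move=> h8. lra.
Qed.

End Helpers.


Section H2.
Variable R : realType.
Implicit Types (l c x y X Y t p q d a m : R).

Lemma ln_conc l (a b : R) : 0 <= l -> l <= 1 -> 0 < a -> 0 < b ->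
  l * ln a + (1-l) * ln b <= ln (l*a + (1-l)*b).
Proof.
move=> l0 l1 a0 b0.
have := @concave_ln R (Itv01 l0 l1) a b a0 b0.
by rewrite !convRE /=.
Qed.

Lemma Ccap_mono x y : 0 <= x -> x <= y -> Ccap x <= Ccap y.
Proof.
move=> hx hxy; rewrite /Ccap; apply: ler_wpM2r; first by rewrite invr_ge0.
by rewrite ler_ln ?posrE; lra.
Qed.

Lemma Ccap_conc l x y : 0 <= l -> l <= 1 -> 0 <= x -> 0 <= y ->
  l * Ccap x + (1 - l) * Ccap y <= Ccap (l * x + (1 - l) * y).
Proof.
move=> l0 l1 hx hy.
have := @ln_conc l (1 + x) (1 + y) l0 l1 ltac:(lra) ltac:(lra).
have -> : l * (1 + x) + (1 - l) * (1 + y) = 1 + (l * x + (1 - l) * y) by ring.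
move=> h; rewrite /Ccap !mulrA -mulrDl; apply: ler_wpM2r => //.
Qed.

Lemma comb_le l (A1 A2 B1 B2 : R) : 0 <= l -> l <= 1 -> A1 <= B1 -> A2 <= B2 ->
  l * A1 + (1 - l) * A2 <= l * B1 + (1 - l) * B2.
Proof.
move=> l0 l1 h1 h2; apply: lerD; apply: ler_wpM2l => //; lra.
Qed.

Lemma Ccap_qc (M z1 z2 z : R) : 0 <= z1 -> 0 <= z2 -> M <= Ccap z1 -> M <= Ccap z2 ->
  Num.min z1 z2 <= z -> M <= Ccap z.
Proof.
move=> h1 h2 m1 m2; rewrite ge_min => /orP[] hz.
  by apply: le_trans m1 (Ccap_mono h1 hz).
by apply: le_trans m2 (Ccap_mono h2 hz).
Qed.

Lemma sqrt_conc l (s1 s2 r1 r2 : R) : 0 <= l -> l <= 1 -> 0 <= s1 -> 0 <= s2 ->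
  0 <= r1 -> 0 <= r2 ->
  l * Num.sqrt (s1 * r1) + (1 - l) * Num.sqrt (s2 * r2) <=
  Num.sqrt ((l * s1 + (1 - l) * s2) * (l * r1 + (1 - l) * r2)).
Proof.
move=> l0 l1 hs1 hs2 hr1 hr2.
set a := Num.sqrt (s1 * r1); set b := Num.sqrt (s2 * r2).
have ha : 0 <= a := sqrtr_ge0 _.
have hb : 0 <= b := sqrtr_ge0 _.
have ea : a ^+ 2 = s1 * r1 by rewrite sqr_sqrtr // mulr_ge0.
have eb : b ^+ 2 = s2 * r2 by rewrite sqr_sqrtr // mulr_ge0.
have hL : 0 <= l * a + (1 - l) * b.
  by apply: addr_ge0; apply: mulr_ge0 => //; lra.
have hP : 0 <= (l * s1 + (1 - l) * s2) * (l * r1 + (1 - l) * r2).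
  by apply: mulr_ge0; apply: addr_ge0; apply: mulr_ge0 => //; lra.
have hc : 2 * (a * b) <= s1 * r2 + s2 * r1.
  have h0 : 0 <= s1 * r2 + s2 * r1 by apply: addr_ge0; apply: mulr_ge0.
  have hab : 0 <= 2 * (a * b) by apply: mulr_ge0 => //; apply: mulr_ge0.
  rewrite -ler_sqr ?nnegrE //.
  have -> : (2 * (a * b)) ^+ 2 = 4 * (a ^+ 2 * b ^+ 2) by ring.
  rewrite ea eb.
  have : 0 <= (s1 * r2 - s2 * r1) ^+ 2 := sqr_ge0 _.
  have -> : 4 * (s1 * r1 * (s2 * r2)) = (s1 * r2 + s2 * r1) ^+ 2 - (s1 * r2 - s2 * r1) ^+ 2 by ring.
  lra.
rewrite -(ger0_norm hL) -sqrtr_sqr ler_sqrt //.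
have -> : (l * a + (1 - l) * b) ^+ 2 =
  l ^+ 2 * a ^+ 2 + (1 - l) ^+ 2 * b ^+ 2 + l * (1 - l) * (2 * (a * b)) by ring.
have -> : (l * s1 + (1 - l) * s2) * (l * r1 + (1 - l) * r2) =
  l ^+ 2 * (s1 * r1) + (1 - l) ^+ 2 * (s2 * r2) + l * (1 - l) * (s1 * r2 + s2 * r1) by ring.
rewrite ea eb; apply: lerD => //; apply: ler_wpM2l => //.
by apply: mulr_ge0 => //; lra.
Qed.

Lemma qc_prod l p1 p2 a1 a2 m : 0 <= l -> l <= 1 -> 0 <= p1 -> 0 <= p2 ->
  0 <= a1 -> 0 <= a2 -> m <= p1 * a1 -> m <= p2 * a2 ->
  m <= (l * p1 + (1 - l) * p2) * (l * a1 + (1 - l) * a2).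
Proof.
move=> l0 l1 hp1 hp2 ha1 ha2 m1 m2.
have hP : 0 <= (l * p1 + (1 - l) * p2) * (l * a1 + (1 - l) * a2).
  by apply: mulr_ge0; apply: addr_ge0; apply: mulr_ge0 => //; lra.
have [hm|hm] := lerP m 0; first lra.
have hc : 2 * m <= p1 * a2 + p2 * a1.
  have h0 : 0 <= p1 * a2 + p2 * a1 by apply: addr_ge0; apply: mulr_ge0.
  rewrite -ler_sqr ?nnegrE //; last lra.
  have : 0 <= (p1 * a2 - p2 * a1) ^+ 2 := sqr_ge0 _.
  have -> : (p1 * a2 + p2 * a1) ^+ 2 = (p1 * a2 - p2 * a1) ^+ 2 + 4 * ((p1 * a1) * (p2 * a2)) by ring.
  have : m * m <= (p1 * a1) * (p2 * a2).
    by apply: ler_pM => //; lra.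
  have -> : (2 * m) ^+ 2 = 4 * (m * m) by ring.
  lra.
have -> : (l * p1 + (1 - l) * p2) * (l * a1 + (1 - l) * a2) =
  l ^+ 2 * (p1 * a1) + (1 - l) ^+ 2 * (p2 * a2) + l * (1 - l) * (p1 * a2 + p2 * a1) by ring.
have e1 : 0 <= l ^+ 2 := sqr_ge0 _.
have e2 : 0 <= (1 - l) ^+ 2 := sqr_ge0 _.
have e3 : 0 <= l * (1 - l) by apply: mulr_ge0 => //; lra.
have f1 := ler_wpM2l e1 m1.
have f2 := ler_wpM2l e2 m2.
have f3 := ler_wpM2l e3 hc.
have -> : m = l ^+ 2 * m + (1 - l) ^+ 2 * m + l * (1 - l) * (2 * m) by ring.
by apply: lerD; [apply: lerD|].
Qed.

End H2.


Lemma RDF_ge (R : realType) (N : nat) (m rho : R) (S : snrvec R N) :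
  m <= Ccap ((1 - rho ^+ 2) * snr_sr S) ->
  (forall j, m <= Ccap (f_j rho S j)) -> m <= R_DF rho S.
Proof.
move=> hg hf; apply: le_bigmin => // j _.
by rewrite le_min hf.
Qed.

Lemma RDF_le_g (R : realType) (N : nat) (rho : R) (S : snrvec R N) :
  R_DF rho S <= Ccap ((1 - rho ^+ 2) * snr_sr S).
Proof. exact: bigmin_le_id. Qed.

Lemma RDF_le_f (R : realType) (N : nat) (rho : R) (S : snrvec R N) j :
  R_DF rho S <= Ccap (f_j rho S j).
Proof.
apply: le_trans (bigmin_le _ j _) _.
by rewrite ge_min lexx.
Qed.

Unset Implicit Arguments.
Set Strict Implicit.

Theorem theorem2 (R : realType) (N : nat) (hN : (1 <= N)%N) :
  (* (i) concave in rho on [0,1] for fixed S *)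
  (forall (S : snrvec R N), snr_nonneg S ->
     forall (rho1 rho2 l : R), 0 <= rho1 <= 1 -> 0 <= rho2 <= 1 -> 0 <= l <= 1 ->
       l * R_DF rho1 S + (1 - l) * R_DF rho2 S
         <= R_DF (l * rho1 + (1 - l) * rho2) S) /\
  (* (ii) concave in S on [0,oo)^{2N+1} for fixed rho *)
  (forall (rho : R), 0 <= rho <= 1 ->
     forall (S1 S2 : snrvec R N) (l : R), snr_nonneg S1 -> snr_nonneg S2 ->
       0 <= l <= 1 ->
       l * R_DF rho S1 + (1 - l) * R_DF rho S2 <= R_DF rho (snr_comb l S1 S2)) /\
  (* (iii) (t,S) |-> R_DF(sqrt t, S) quasi-concave on [0,1] x [0,oo)^{2N+1} *)
  (forall (t1 t2 : R) (S1 S2 : snrvec R N) (l : R),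
     0 <= t1 <= 1 -> 0 <= t2 <= 1 -> snr_nonneg S1 -> snr_nonneg S2 ->
     0 <= l <= 1 ->
     Num.min (R_DF (Num.sqrt t1) S1) (R_DF (Num.sqrt t2) S2)
       <= R_DF (Num.sqrt (l * t1 + (1 - l) * t2)) (snr_comb l S1 S2)).
Proof.
split; [|split].
- move=> S [ha [hs hr]] rho1 rho2 l /andP[p1 q1] /andP[p2 q2] /andP[l0 l1].
  apply: RDF_ge.
  + apply: le_trans (comb_le l0 l1 (@RDF_le_g _ _ _ _) (@RDF_le_g _ _ _ _)) _.
    have g1 : 0 <= (1 - rho1 ^+ 2) * snr_sr S by apply: mulr_ge0 => //; nra.
    have g2 : 0 <= (1 - rho2 ^+ 2) * snr_sr S by apply: mulr_ge0 => //; nra.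
    apply: le_trans (Ccap_conc l0 l1 g1 g2) _.
    apply: Ccap_mono; first by apply: addr_ge0; apply: mulr_ge0 => //; lra.
    have -> : (1 - (l * rho1 + (1 - l) * rho2) ^+ 2) * snr_sr S =
      l * ((1 - rho1 ^+ 2) * snr_sr S) + (1 - l) * ((1 - rho2 ^+ 2) * snr_sr S)
      + l * (1 - l) * (rho1 - rho2) ^+ 2 * snr_sr S by ring.
    rewrite lerDl; apply: mulr_ge0 => //; apply: mulr_ge0; last exact: sqr_ge0.
    by apply: mulr_ge0 => //; lra.
  + move=> j.
    apply: le_trans (comb_le l0 l1 (@RDF_le_f _ _ _ _ j) (@RDF_le_f _ _ _ _ j)) _.
    have hsr : 0 <= Num.sqrt (snr_s S j * snr_r S j) := sqrtr_ge0 _.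
    have f1 : 0 <= f_j rho1 S j.
      rewrite /f_j; apply: addr_ge0; first by apply: addr_ge0.
      by apply: mulr_ge0 => //; apply: mulr_ge0.
    have f2 : 0 <= f_j rho2 S j.
      rewrite /f_j; apply: addr_ge0; first by apply: addr_ge0.
      by apply: mulr_ge0 => //; apply: mulr_ge0.
    apply: le_trans (Ccap_conc l0 l1 f1 f2) _.
    apply: Ccap_mono; first by apply: addr_ge0; apply: mulr_ge0 => //; lra.
    by rewrite /f_j; rewrite le_eqVlt; apply/orP; left; apply/eqP; ring.
- move=> rho /andP[p0 p1] S1 S2 l [ha1 [hs1 hr1]] [ha2 [hs2 hr2]] /andP[l0 l1].
  apply: RDF_ge.
  + apply: le_trans (comb_le l0 l1 (@RDF_le_g _ _ _ _) (@RDF_le_g _ _ _ _)) _.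
    have g1 : 0 <= (1 - rho ^+ 2) * snr_sr S1 by apply: mulr_ge0 => //; nra.
    have g2 : 0 <= (1 - rho ^+ 2) * snr_sr S2 by apply: mulr_ge0 => //; nra.
    apply: le_trans (Ccap_conc l0 l1 g1 g2) _.
    apply: Ccap_mono; first by apply: addr_ge0; apply: mulr_ge0 => //; lra.
    by rewrite /=; rewrite le_eqVlt; apply/orP; left; apply/eqP; ring.
  + move=> j.
    apply: le_trans (comb_le l0 l1 (@RDF_le_f _ _ _ _ j) (@RDF_le_f _ _ _ _ j)) _.
    have f1 : 0 <= f_j rho S1 j.
      rewrite /f_j; apply: addr_ge0; first by apply: addr_ge0.
      by apply: mulr_ge0; [apply: mulr_ge0 | apply: sqrtr_ge0].
    have f2 : 0 <= f_j rho S2 j.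
      rewrite /f_j; apply: addr_ge0; first by apply: addr_ge0.
      by apply: mulr_ge0; [apply: mulr_ge0 | apply: sqrtr_ge0].
    apply: le_trans (Ccap_conc l0 l1 f1 f2) _.
    apply: Ccap_mono; first by apply: addr_ge0; apply: mulr_ge0 => //; lra.
    rewrite /f_j /=.
    have hq := sqrt_conc l0 l1 (hs1 j) (hs2 j) (hr1 j) (hr2 j).
    have h2 : 0 <= 2 * rho by apply: mulr_ge0.
    have := ler_wpM2l h2 hq.
    set A := Num.sqrt (snr_s S1 j * snr_r S1 j).
    set B := Num.sqrt (snr_s S2 j * snr_r S2 j).
    set C := Num.sqrt _.
    move=> h.
    have -> : l * (snr_s S1 j + snr_r S1 j + 2 * rho * A) +
      (1 - l) * (snr_s S2 j + snr_r S2 j + 2 * rho * B) =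
      l * snr_s S1 j + (1 - l) * snr_s S2 j + (l * snr_r S1 j + (1 - l) * snr_r S2 j)
      + 2 * rho * (l * A + (1 - l) * B) by ring.
    by rewrite lerD2l.
- move=> t1 t2 S1 S2 l /andP[t10 t11] /andP[t20 t21] [ha1 [hs1 hr1]] [ha2 [hs2 hr2]] /andP[l0 l1].
  set M := Num.min _ _.
  have hM1 : M <= R_DF (Num.sqrt t1) S1 by rewrite /M ge_min lexx.
  have hM2 : M <= R_DF (Num.sqrt t2) S2 by rewrite /M ge_min lexx orbT.
  apply: RDF_ge.
  + have g1 : 0 <= (1 - t1) * snr_sr S1 by apply: mulr_ge0 => //; lra.
    have g2 : 0 <= (1 - t2) * snr_sr S2 by apply: mulr_ge0 => //; lra.
    apply: (Ccap_qc g1 g2).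
    * by apply: le_trans hM1 _; rewrite -{2}(sqr_sqrtr t10); exact: (@RDF_le_g _ _ _ _).
    * by apply: le_trans hM2 _; rewrite -{2}(sqr_sqrtr t20); exact: (@RDF_le_g _ _ _ _).
    rewrite sqr_sqrtr; last by apply: addr_ge0; apply: mulr_ge0 => //; lra.
    rewrite /=.
    have -> : 1 - (l * t1 + (1 - l) * t2) = l * (1 - t1) + (1 - l) * (1 - t2) by ring.
    apply: qc_prod => //; try lra.
      by rewrite ge_min lexx.
    by rewrite ge_min lexx orbT.
  + move=> j.
    have f1 : 0 <= f_j (Num.sqrt t1) S1 j.
      rewrite /f_j; apply: addr_ge0; first by apply: addr_ge0.
      by apply: mulr_ge0; [apply: mulr_ge0 => //; apply: sqrtr_ge0 | apply: sqrtr_ge0].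
    have f2 : 0 <= f_j (Num.sqrt t2) S2 j.
      rewrite /f_j; apply: addr_ge0; first by apply: addr_ge0.
      by apply: mulr_ge0; [apply: mulr_ge0 => //; apply: sqrtr_ge0 | apply: sqrtr_ge0].
    apply: (Ccap_qc f1 f2).
    * exact: le_trans hM1 (@RDF_le_f _ _ _ _ j).
    * exact: le_trans hM2 (@RDF_le_f _ _ _ _ j).
    rewrite /f_j /=.
    apply: key => //.
    * by rewrite ge_min lexx.
    * by rewrite ge_min lexx orbT.
Qed.
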